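(* Let $T(n) = (3n+1)/2^{v_2(3n+1)}$ for odd $n \ge 1$, and say an odd $n \equiv 1 \pmod 4$ produces $(L,G)=(1,1)$ if $T(n)\equiv 3 \pmod 4$ and $T(T(n)) \equiv 1 \pmod 4$. For $r \in \{0,\dots,63\}$ with $r \equiv 1 \pmod 4$, consider the integers $n = 64a + r$, $a \ge 0$. Then the set of such $r$ for which some $n = 64a+r$ produces $(L,G)=(1,1)$ is exactly $\{21,25,29,37,53,57\}$; for $r \in \{25,29,57\}$ every $n = 64a+r$ produces $(L,G)=(1,1)$ (unconditional), while for $r \in \{21,37,53\}$ this holds for some but not all $a$ (conditional). In particular the three conditional classes $21,37,53$ all satisfy $r \equiv 5 \pmod 8$.
   Context: $v_2$ is the $2$-adic valuation. $(L,G)=(1,1)$ means that, in the orbit of $n$ under $T$ with burst indicator $X_t = \mathbf{1}[n_t \equiv 1 \pmod 4]$, the burst run starting at $n$ has length $1$ and the following gap run has length $1$. *)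

(* Defs.v *)
From mathcomp Require Import all_boot.
Set Implicit Arguments. Unset Strict Implicit. Unset Printing Implicit Defensive.

Definition v2 (m : nat) : nat := logn 2 m.

Definition T (n : nat) : nat := (3 * n + 1) %/ 2 ^ v2 (3 * n + 1).

Definition produces11 (n : nat) : Prop :=
  [/\ odd n, n %% 4 = 1, T n %% 4 = 3 & T (T n) %% 4 = 1].

(* Main.v *)
Require Import Defs.
From mathcomp Require Import all_boot.
From mathcomp Require Import zify.

Lemma T_eq n j u : 3 * n + 1 = 2 ^ j * u -> odd u -> T n = u.
Proof.
move=> E ou; rewrite /T /v2 E.
have u0 : 0 < u by case: u ou E.
have c2 : coprime 2 u by rewrite coprime2n.
by rewrite lognM ?expn_gt0 // pfactorK // (logn_coprime c2) addn0 mulKn ?expn_gt0.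
Qed.

Ltac tc j := apply: (@T_eq _ j); [lia | by rewrite oddD oddM].

Ltac negT1 a f := move=> [] _ _; rewrite (_ : T _ = f); [lia | tc 0].

Lemma neg_all r : r \in [:: 1; 5; 9; 13; 17; 33; 41; 45; 49; 61] ->
  forall a, ~ produces11 (64 * a + r).
Proof.
rewrite !inE => /or4P [/eqP->|/eqP->|/eqP->|/or4P [/eqP->|/eqP->|/eqP->|/or4P [/eqP->|/eqP->|/eqP->|/eqP->]]] a [] _ _.
- by rewrite (@T_eq _ 2 (48*a+1)); [lia|rewrite !expnS expn0; lia|by rewrite oddD oddM].
- by rewrite (@T_eq _ 4 (12*a+1)); [lia|rewrite !expnS expn0; lia|by rewrite oddD oddM].
- rewrite (@T_eq _ 2 (48*a+7)); [|rewrite !expnS expn0; lia|by rewrite oddD oddM].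
  by rewrite (@T_eq _ 1 (72*a+11)); [lia|rewrite !expnS expn0; lia|by rewrite oddD oddM].
- by rewrite (@T_eq _ 3 (24*a+5)); [lia|rewrite !expnS expn0; lia|by rewrite oddD oddM].
- by rewrite (@T_eq _ 2 (48*a+13)); [lia|rewrite !expnS expn0; lia|by rewrite oddD oddM].
- by rewrite (@T_eq _ 2 (48*a+25)); [lia|rewrite !expnS expn0; lia|by rewrite oddD oddM].
- rewrite (@T_eq _ 2 (48*a+31)); [|rewrite !expnS expn0; lia|by rewrite oddD oddM].
  by rewrite (@T_eq _ 1 (72*a+47)); [lia|rewrite !expnS expn0; lia|by rewrite oddD oddM].
- by rewrite (@T_eq _ 3 (24*a+17)); [lia|rewrite !expnS expn0; lia|by rewrite oddD oddM].
- by rewrite (@T_eq _ 2 (48*a+37)); [lia|rewrite !expnS expn0; lia|by rewrite oddD oddM].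
- rewrite (@T_eq _ 3 (24*a+23)); [|rewrite !expnS expn0; lia|by rewrite oddD oddM].
  by rewrite (@T_eq _ 1 (36*a+35)); [lia|rewrite !expnS expn0; lia|by rewrite oddD oddM].
Qed.

Lemma pos_all r : r \in [:: 25; 29; 57] -> forall a, produces11 (64 * a + r).
Proof.
rewrite !inE => /or3P [/eqP->|/eqP->|/eqP->] a.
- have E1 : T (64*a+25) = 48*a+19 by apply: (@T_eq _ 2); [rewrite !expnS expn0; lia|rewrite oddD oddM].
  have E2 : T (48*a+19) = 72*a+29 by apply: (@T_eq _ 1); [rewrite !expnS expn0; lia|rewrite oddD oddM].
  split; [by rewrite oddD oddM | lia | rewrite E1; lia | rewrite E1 E2; lia].
- have E1 : T (64*a+29) = 24*a+11 by apply: (@T_eq _ 3); [rewrite !expnS expn0; lia|rewrite oddD oddM].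
  have E2 : T (24*a+11) = 36*a+17 by apply: (@T_eq _ 1); [rewrite !expnS expn0; lia|rewrite oddD oddM].
  split; [by rewrite oddD oddM | lia | rewrite E1; lia | rewrite E1 E2; lia].
- have E1 : T (64*a+57) = 48*a+43 by apply: (@T_eq _ 2); [rewrite !expnS expn0; lia|rewrite oddD oddM].
  have E2 : T (48*a+43) = 72*a+65 by apply: (@T_eq _ 1); [rewrite !expnS expn0; lia|rewrite oddD oddM].
  split; [by rewrite oddD oddM | lia | rewrite E1; lia | rewrite E1 E2; lia].
Qed.

Lemma cond_all r : r \in [:: 21; 37; 53] ->
  (exists a : nat, produces11 (64 * a + r)) /\
  (exists a : nat, ~ produces11 (64 * a + r)).
Proof.
rewrite !inE => /or3P [/eqP->|/eqP->|/eqP->]; split.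
- by exists 6; split; vm_compute.
- by exists 0; case=> _ _; vm_compute.
- by exists 1; split; vm_compute.
- by exists 0; case=> _ _ _; vm_compute.
- by exists 1; split; vm_compute.
- by exists 0; case=> _ _; vm_compute.
Qed.

Theorem corollary5p2 :
  (forall r : nat, r < 64 -> r %% 4 = 1 ->
     ((exists a : nat, produces11 (64 * a + r)) <->
      r \in [:: 21; 25; 29; 37; 53; 57]))
  /\ (forall r : nat, r \in [:: 25; 29; 57] ->
        forall a : nat, produces11 (64 * a + r))
  /\ (forall r : nat, r \in [:: 21; 37; 53] ->
        (exists a : nat, produces11 (64 * a + r)) /\
        (exists a : nat, ~ produces11 (64 * a + r)))
  /\ (forall r : nat, r \in [:: 21; 37; 53] -> r %% 8 = 5).
Proof.
split; last split; last split.
- move=> r hr h4; split.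
  + have: (r \in [:: 21; 25; 29; 37; 53; 57]) || (r \in [:: 1; 5; 9; 13; 17; 33; 41; 45; 49; 61]).
      by move: hr h4; do 64! (case: r => [|r]; first by []).
    by case/orP=> // /neg_all N [a /N].
  + rewrite !inE => /orP [/eqP->|/or4P [/eqP->|/eqP->|/eqP->|/orP [/eqP->|/eqP->]]];
    try (by case: (@cond_all 21 isT));
    try (by case: (@cond_all 37 isT));
    try (by case: (@cond_all 53 isT));
    by exists 0; apply: pos_all; rewrite !inE.
- exact: pos_all.
- exact: cond_all.
- by move=> r; rewrite !inE => /or3P [/eqP->|/eqP->|/eqP->].
Qed.
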